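(* Let $G$ be a finite simple graph and let $\overrightarrow{G}$ be the directed graph obtained by replacing every edge $xy$ of $G$ by the two directed edges $\overrightarrow{xy}$ and $\overrightarrow{yx}$. Let $\mathrm{m}_G=|V(G)|-r(G)-1$. If $G$ has a complete $r$-source, then the $\mathrm{m}_G$-skeleton $\Delta^{(\mathrm{m}_G)}(\overrightarrow{G})$ of $\Delta(\overrightarrow{G})$ is shellable.
   Context: For a finite directed graph $D$, the complex of directed trees $\Delta(D)$ has the directed edges of $D$ as vertices, and its faces are the edge sets of directed forests in $D$ (vertex-disjoint unions of rooted directed trees; equivalently, edge sets in which every vertex has in-degree at most $1$ and there is no directed cycle). The $k$-skeleton $\Delta^{(k)}$ consists of all faces of dimension at most $k$. $N(v)$ is the neighbour set of $v$ in $G$. A set $A\subseteq V(G)$ is strongly independent if it is independent and $N(u)\cap N(v)=\emptyset$ for distinct $u,v\in A$; $r(G)$ is the maximum size of a strongly independent set (and $\mathrm{m}_G$ is the largest $k$ for which the $k$-skeleton of $\Delta(\overrightarrow{G})$ is pure). An inclusion-maximal strongly independent set $A=\{x_1,\ldots,x_r\}$ is a complete $r$-source if $V(G)=A\cup N(x_1)\cup\cdots\cup N(x_r)$. A pure simplicial complex is shellable if its facets admit a linear order $F_1,\ldots,F_k$ such that for all $i<j$ there exist $l<j$ and a vertex $v\in F_j$ with $F_i\cap F_j\subseteq F_l\cap F_j=F_j\setminus\{v\}$. *)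

(* Defs.v *)
From mathcomp Require Import all_boot all_order all_algebra.
Set Implicit Arguments. Unset Strict Implicit. Unset Printing Implicit Defensive.

Section Defs.
Variable T : finType.
Variable e : rel T.

Definition simple_graph := symmetric e /\ irreflexive e.

Definition nbhd (v : T) : {set T} := [set u | e v u].

(* directed edges of the doubled digraph G->: both orientations of each edge *)
Definition arcs : {set T * T} := [set p | e p.1 p.2].

Definition arc_rel (F : {set T * T}) : rel T := fun x y => (x, y) \in F.

Definition directed_forest (F : {set T * T}) : bool :=
  [&& F \subset arcs,
      [forall y : T, #|[set x | (x, y) \in F]| <= 1]
    & [forall p in F, ~~ connect (arc_rel F) p.2 p.1]].

Definition dtree_complex : {set {set T * T}} := [set F | directed_forest F].

Definition strongly_indep (A : {set T}) : bool :=
  [forall u in A, forall v in A, ~~ e u v] &&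
  [forall u in A, forall v in A, (u != v) ==> [disjoint nbhd u & nbhd v]].

Definition rG : nat := \max_(A : {set T} | strongly_indep A) #|A|.

Definition mG : int := (#|T|%:Z - (rG)%:Z - 1)%R.

Definition complete_source (A : {set T}) : bool :=
  [&& strongly_indep A,
      [forall B : {set T}, (A \proper B) ==> ~~ strongly_indep B]
    & A :|: (\bigcup_(x in A) nbhd x) == [set: T]].

End Defs.

Section Complexes.
Variable V : finType.
Implicit Types (K : {set {set V}}) (F : {set V}).

Definition skeleton (k : int) K : {set {set V}} :=
  [set F in K | ((#|F|%:Z - 1)%R <= k)%R].

Definition facets K : {set {set V}} :=
  [set F in K | [forall G in K, (F \subset G) ==> (G == F)]].

Definition pure K : Prop :=
  forall F G, F \in facets K -> G \in facets K -> #|F| = #|G|.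

Definition shellable K : Prop :=
  pure K /\
  exists s : seq {set V},
    [/\ uniq s,
        (forall F, (F \in s) = (F \in facets K)) &
        forall i j, i < j -> j < size s ->
          exists l, l < j /\ exists v, v \in nth set0 s j /\
            (nth set0 s i :&: nth set0 s j \subset nth set0 s l :&: nth set0 s j)
            /\ nth set0 s l :&: nth set0 s j = nth set0 s j :\ v].
End Complexes.

(* Main.v *)
Require Import Defs.
From mathcomp Require Import all_boot all_order all_algebra.
From mathcomp Require Import zify.
Set Implicit Arguments. Unset Strict Implicit. Unset Printing Implicit Defensive.

Section Forest.
Variable T : finType.
Variable e : rel T.
Implicit Types (F : {set T * T}).

Definition indeg1 F := forall x x' y, (x, y) \in F -> (x', y) \in F -> x = x'.

Lemma forest_indeg F : directed_forest e F -> indeg1 F.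
Proof.
case/and3P=> _ /forallP H _ x x' y h1 h2.
have := H y; move/card_le1_eqP => H'.
have := H' x x'; rewrite !inE; by move=> ->.
Qed.

Lemma forest_arcs F p : directed_forest e F -> p \in F -> e p.1 p.2.
Proof. by case/and3P=> /subsetP S _ _ /S; rewrite inE. Qed.

Lemma forest_acyc F p : directed_forest e F -> p \in F -> ~~ connect (arc_rel F) p.2 p.1.
Proof. by case/and3P=> _ _ /forallP H pF; move: (H p); rewrite pF. Qed.

Lemma root_connect F y z : (forall x, (x, z) \notin F) -> connect (arc_rel F) y z -> y = z.
Proof.
move=> Hz /connectP [p Hp Ez].
case/lastP: p Hp Ez => [|p' w] //=.
rewrite rcons_path last_rcons => /andP [_ Hw] Ez; subst w.
by move: (Hz (last y p')); rewrite /arc_rel in Hw; rewrite Hw.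
Qed.

Lemma anc_path F : indeg1 F -> forall n p q u w x, size p + size q <= n ->
  path (arc_rel F) u p -> path (arc_rel F) w q -> last u p = x -> last w q = x ->
  connect (arc_rel F) u w || connect (arc_rel F) w u.
Proof.
move=> H; elim=> [|n IH] p q u w x.
  case: p => //; case: q => // _ _ _ /= -> ->. by rewrite connect0.
move=> Hs.
case/lastP: p Hs => [|p' pu] Hs.
  move=> _ Hq /= -> Ex2; apply/orP; right; apply/connectP; exists q => //.
case/lastP: q Hs => [|q' qw] Hs.
  move=> Hp _ Ex /= ->; apply/orP; left; apply/connectP; exists (rcons p' pu) => //.
rewrite !rcons_path !last_rcons => /andP [Hp' Hu] /andP [Hq' Hw] Ex Ex2.
subst pu qw.
have Heq : last u p' = last w q'.
  by apply: (H _ _ x); [exact: Hu | exact: Hw].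
apply: (IH p' q' u w (last u p')) => //.
by move: Hs; rewrite !size_rcons addSn addnS ltnS; apply: leq_trans; apply: leqnSn.
Qed.

Lemma anc_linear F : indeg1 F -> forall u w x,
  connect (arc_rel F) u x -> connect (arc_rel F) w x ->
  connect (arc_rel F) u w || connect (arc_rel F) w u.
Proof.
move=> H u w x /connectP [p Hp Ex] /connectP [q Hq Ex2].
exact: (anc_path H (leqnn _) Hp Hq (esym Ex) (esym Ex2)).
Qed.

Lemma uniq_path_eq F : indeg1 F -> forall n p q u x, size p + size q <= n ->
  path (arc_rel F) u p -> path (arc_rel F) u q -> last u p = x -> last u q = x ->
  uniq (u :: p) -> uniq (u :: q) -> p = q.
Proof.
move=> H; elim=> [|n IH] p q u x.
  by case: p => //; case: q.
move=> Hs.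
case/lastP: p Hs => [|p' pu] Hs.
  case/lastP: q Hs => [|q' qw] // Hs _ _ /= <-; rewrite last_rcons => -> _.
  by rewrite /= mem_rcons inE eqxx.
case/lastP: q Hs => [|q' qw] Hs.
  move=> _ _; rewrite last_rcons => -> /= ->.
  by rewrite /= mem_rcons inE eqxx.
rewrite !rcons_path !last_rcons => /andP [Hp' Hu] /andP [Hq' Hw] Ex Ex2.
subst pu qw => Up Uq.
have Heq : last u p' = last u q'.
  by apply: (H _ _ x); [exact: Hu | exact: Hw].
suff -> : p' = q' by [].
apply: (IH p' q' u (last u p')) => //.
- by move: Hs; rewrite !size_rcons addSn addnS ltnS; apply: leq_trans; apply: leqnSn.
- by move: Up; rewrite -rcons_cons rcons_uniq => /andP [].
- by move: Uq; rewrite -rcons_cons rcons_uniq => /andP [].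
Qed.

Lemma connect_add F w z u v :
  connect (arc_rel ((w, z) |: F)) u v ->
  connect (arc_rel F) u v \/ (connect (arc_rel F) u w /\ connect (arc_rel F) z v).
Proof.
case/connectP=> p Hp ->.
elim: p u Hp => [|y p IH] u /=.
  by move=> _; left; rewrite connect0.
case/andP=> Huy /IH [Hc|[Hc1 Hc2]].
- move: Huy; rewrite /arc_rel in_setU1 => /orP [/eqP [Eu Ey]|Huy].
    subst u y; by right; split; [apply: connect0|].
  by left; apply: connect_trans Hc; apply: connect1.
- move: Huy; rewrite /arc_rel in_setU1 => /orP [/eqP [Eu Ey]|Huy].
    subst u y; by right; split; [apply: connect0|].
  by right; split => //; apply: connect_trans Hc1; apply: connect1.
Qed.

Lemma add_forest F w z : directed_forest e F -> e w z ->
  (forall x, (x, z) \notin F) -> ~~ connect (arc_rel F) z w ->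
  directed_forest e ((w, z) |: F).
Proof.
move=> HF ewz Hz Hc.
have HF' := HF; case/and3P: HF' => Hsub /forallP Hin /forallP Hac.
apply/and3P; split.
- apply/subsetP => p; rewrite in_setU1 => /orP [/eqP ->|pF].
    by rewrite inE.
  by move/subsetP: Hsub; apply.
- apply/forallP => y.
  case: (eqVneq y z) => [->|ynz].
    apply/card_le1_eqP => x1 x2; rewrite !inE.
    case/orP=> [/eqP [->] //|/negP h1]; last by move: (Hz x1) => /negP.
    case/orP=> [/eqP [->] //|h2]; by move: (Hz x2); rewrite h2.
  apply: leq_trans (Hin y); apply: subset_leq_card; apply/subsetP => x.
  by rewrite !inE => /orP [/eqP [_ yz]|//]; move: ynz; rewrite yz eqxx.
- apply/forallP => p; apply/implyP; rewrite in_setU1 => /orP [/eqP ->|pF] /=.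
    apply/negP => /connect_add [|[]]; by rewrite (negbTE Hc).
  apply/negP => /connect_add [Hc'|[Hc1 Hc2]].
    by move: (Hac p); rewrite pF Hc'.
  move/negP: Hc; apply; apply: connect_trans Hc2 _.
  apply: connect_trans _ Hc1; apply: connect1; by rewrite /arc_rel -surjective_pairing.
Qed.

Lemma sub_forest F F' : F' \subset F -> directed_forest e F -> directed_forest e F'.
Proof.
move=> /subsetP sFF /and3P [Hsub /forallP Hin /forallP Hac].
apply/and3P; split.
- apply/subsetP => p /sFF; by move/subsetP: Hsub; apply.
- apply/forallP => y; apply: leq_trans (Hin y); apply: subset_leq_card.
  by apply/subsetP => x; rewrite !inE => /sFF.
- apply/forallP => p; apply/implyP => pF'; apply/negP => Hc.
  move: (Hac p); rewrite (sFF _ pF') /= => /negP; apply.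
  by apply: connect_sub Hc => x y Hxy; apply: connect1; apply: sFF.
Qed.

Lemma connect_uniq (r : rel T) u x : connect r u x ->
  exists p, [/\ path r u p, uniq (u :: p) & last u p = x].
Proof.
case/connectP=> p Hp ->; case/shortenP: Hp => p' Hp' Up _.
by exists p'.
Qed.

Lemma avoid_set F F' u x : indeg1 F -> (exists a0, a0 \in F :\: F') ->
  (forall a, a \in F :\: F' -> connect (arc_rel (F :\ a)) u x) ->
  connect (arc_rel F') u x.
Proof.
move=> H [a0 Ha0] Hall.
have [p [Hp Up Lp]] := connect_uniq (Hall a0 Ha0).
have subF : forall a, subrel (arc_rel (F :\ a)) (arc_rel F).
  by move=> a y z; rewrite /arc_rel !inE => /andP [].
have HpF := sub_path (subF a0) Hp.
apply/connectP; exists p => //.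
apply/(pathP u) => i Hi.
have Hst := (pathP u HpF) i Hi.
rewrite /arc_rel; set st := (_, _).
case Hst' : (st \in F') => //.
have Hd : st \in F :\: F' by rewrite inE Hst' /=; exact: Hst.
have [p2 [Hp2 Up2 Lp2]] := connect_uniq (Hall st Hd).
have E := uniq_path_eq H (leqnn _) (sub_path (subF st) Hp2) HpF Lp2 Lp Up2 Up.
subst p2.
have := (pathP u Hp2) i Hi; by rewrite /arc_rel -/st !inE eqxx.
Qed.

End Forest.

Section Bin.
Variable P : finType.
Definition rk (p : P) : nat := enum_rank p.
Definition wt (X : {set P}) := \sum_(p in X) 2 ^ rk p.

Lemma rk_inj : injective rk.
Proof. by move=> p q /ord_inj /enum_rank_inj. Qed.

Lemma wt_lt m (X : {set P}) : (forall p, p \in X -> rk p < m) -> wt X < 2 ^ m.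
Proof.
elim: m X => [|m IH] X H.
  have -> : X = set0 by apply/setP => p; rewrite inE; apply/negP => /H.
  by rewrite /wt big_set0.
rewrite /wt (big_setID [set p | rk p == m]) /=.
have H1 : \sum_(i in X :\: [set p | rk p == m]) 2 ^ rk i < 2 ^ m.
  apply: IH => p; rewrite !inE => /andP [Hm /H]; rewrite ltnS leq_eqVlt.
  by rewrite (negbTE Hm).
have H2 : \sum_(i in X :&: [set p | rk p == m]) 2 ^ rk i <= 2 ^ m.
  rewrite (eq_bigr (fun _ => 2 ^ m)); last by move=> i; rewrite !inE => /andP [_ /eqP ->].
  rewrite sum_nat_const.
  have Hc : #|X :&: [set p | rk p == m]| <= 1.
    apply/card_le1_eqP => p q; rewrite !inE => /andP [_ /eqP Hp] /andP [_ /eqP Hq].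
    by apply: rk_inj; rewrite Hp Hq.
  by rewrite -[leqRHS]mul1n leq_mul2r Hc orbT.
rewrite expnS mul2n -addnn; apply: leq_trans (leq_add H2 H1); rewrite addnS.
by [].
Qed.

Lemma wt_max (X Y : {set P}) : X != Y -> wt X <= wt Y ->
  exists2 b, b \in Y :\: X & forall a, a \in X :\: Y -> rk a < rk b.
Proof.
move=> XY Hw.
set D := (X :\: Y) :|: (Y :\: X).
have [p0 p0D] : exists p0, p0 \in D.
  case: (set_0Vmem D) => [HD|[x xD]]; last by exists x.
  exfalso; move/negP: XY; apply.
  rewrite eqEsubset; apply/andP; split.
    apply/subsetP => p pX; apply/negPn/negP => pY.
    have : p \in D by rewrite !inE pX pY.
    by rewrite HD inE.
  apply/subsetP => p pY; apply/negPn/negP => pX.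
  have : p \in D by rewrite !inE pX pY orbT.
  by rewrite HD inE.
case: (arg_maxnP rk p0D) => b bD Hb.
have lt_b : forall a, a \in D -> a != b -> rk a < rk b.
  move=> a aD anb; have Ha : rk a <= rk b by exact: (Hb a aD).
  rewrite ltn_neqAle Ha andbT.
  by apply: contra anb => /eqP /rk_inj ->.
have : b \in (X :\: Y) :|: (Y :\: X) := bD.
rewrite in_setU => /orP [bXY|bYX]; last first.
  exists b => // a aXY; apply: lt_b; first by rewrite /D in_setU aXY.
  by apply: contraTneq aXY => ->; move: bYX; rewrite !inE; case: (b \in X); case: (b \in Y).
exfalso; move: Hw; apply/negP; rewrite -ltnNge.
rewrite /wt (@big_setID _ _ _ _ X Y) (@big_setID _ _ _ _ Y X) setIC ltn_add2l.
rewrite (bigD1 b bXY) /=; apply: leq_trans (leq_addr _ _).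
apply: wt_lt => p pYX; apply: lt_b; first by rewrite /D in_setU pYX orbT.
by apply: contraTneq pYX => ->; move: bXY; rewrite !inE; case: (b \in X); case: (b \in Y).
Qed.

End Bin.

Section Source.
Variable T : finType.
Variable e : rel T.
Hypothesis Hsym : symmetric e.
Hypothesis Hirr : irreflexive e.
Variable A : {set T}.
Hypothesis HA : complete_source e A.
Implicit Types (F : {set T * T}).

Lemma A_si : strongly_indep e A.
Proof. by case/and3P: HA. Qed.

Lemma A_indep u v : u \in A -> v \in A -> ~~ e u v.
Proof. by case/andP: A_si => /forallP H _ uA vA; move: (H u); rewrite uA => /forallP /(_ v); rewrite vA. Qed.

Lemma A_disj u v w : u \in A -> v \in A -> e u w -> e v w -> u = v.
Proof.
case/andP: A_si => _ /forallP H uA vA euw evw.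
apply/eqP; apply/negP => /negP unv.
move: (H u); rewrite uA => /forallP /(_ v); rewrite vA unv /= => Hd.
by have := disjointFr (x := w) Hd; rewrite /nbhd !inE euw evw => /(_ isT).
Qed.

Lemma cover v : exists2 x, x \in A & (x == v) || e x v.
Proof.
case/and3P: HA => _ _ /eqP Hc.
have : v \in [set: T] by rewrite inE.
rewrite -Hc in_setU => /orP [vA|/bigcupP [x xA]].
  by exists v; rewrite ?eqxx.
by rewrite /nbhd inE => exv; exists x; rewrite // exv orbT.
Qed.

Definition center v := odflt v [pick x in A | (x == v) || e x v].

Lemma center_spec v : center v \in A /\ ((center v == v) || e (center v) v).
Proof.
rewrite /center; case: pickP => [x /andP [xA Hx]|H] //=.
by have [x xA Hx] := cover v; move: (H x); rewrite xA Hx.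
Qed.

Lemma si_le B : strongly_indep e B -> #|B| <= #|A|.
Proof.
case/andP=> /forallP Hind /forallP Hdis.
have inj : {in B &, injective center}.
  move=> b1 b2 b1B b2B Hc.
  have [c1A c1] := center_spec b1; have [c2A c2] := center_spec b2.
  rewrite -Hc in c2; set x := center b1 in c1 c2 c1A.
  apply/eqP; apply/negP => /negP bn.
  move: (Hdis b1); rewrite b1B => /forallP /(_ b2); rewrite b2B bn /= => Hd.
  move: (Hind b1); rewrite b1B => /forallP /(_ b2); rewrite b2B /= => Hn.
  case/orP: c1 => [/eqP E1|E1]; case/orP: c2 => [/eqP E2|E2].
  - by move: bn; rewrite -E1 -E2 eqxx.
  - by move: Hn; rewrite -E1 E2.
  - by move: Hn; rewrite -E2 Hsym E1.
  - by have := disjointFr (x := x) Hd; rewrite /nbhd !inE Hsym E1 Hsym E2 => /(_ isT).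
rewrite -(card_in_imset inj); apply: subset_leq_card.
by apply/subsetP => y /imsetP [b _ ->]; case: (center_spec b).
Qed.

Lemma rG_eq : rG e = #|A|.
Proof.
apply/eqP; rewrite eqn_leq; apply/andP; split.
  by apply/bigmax_leqP => B; apply: si_le.
by apply: (leq_bigmax_cond (F := fun B : {set T} => #|B|)) A_si.
Qed.

Definition F0 : {set T * T} := [set p | (p.1 \in A) && e p.1 p.2].

Lemma F0_uniq x x' l : (x, l) \in F0 -> (x', l) \in F0 -> x = x'.
Proof. rewrite !inE /= => /andP [xA exl] /andP [x'A ex'l]; exact: A_disj exl ex'l. Qed.

Lemma ext F : directed_forest e F -> #|F| < #|T| - #|A| ->
  exists w z, [/\ (w, z) \in F0, forall x, (x, z) \notin F & directed_forest e ((w, z) |: F)].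
Proof.
move=> HF Hc.
set R := [set v | [forall x, (x, v) \notin F]].
have Rroot : forall z, z \in R -> forall x, (x, z) \notin F.
  by move=> z; rewrite inE => /forallP.
have HR : #|A| < #|R|.
  have Him : [set p.2 | p in F] = ~: R.
    apply/setP => v; rewrite !inE negb_forall; apply/imsetP/existsP.
      by case=> [[x y] pF ->]; exists x; rewrite negbK.
    by case=> x; rewrite negbK => xv; exists (x, v).
  have inj : {in F &, injective (fun p : T * T => p.2)}.
    move=> [x1 y1] [x2 y2] /= p1 p2 E; subst y2.
    by rewrite (forest_indeg HF p1 p2).
  have := cardsC R; rewrite -Him (card_in_imset inj) => E.
  have HA' : #|A| <= #|T| by rewrite -cardsT subset_leq_card // subsetT.
  lia.
have : ~~ [forall z1 in R, forall z2 in R, (center z1 == center z2) ==> (z1 == z2)].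
  apply/negP => /forall_inP H.
  have inj : {in R &, injective center}.
    move=> z1 z2 z1R z2R Ec; apply/eqP.
    by move: (H z1 z1R) => /forall_inP /(_ z2 z2R); rewrite Ec eqxx.
  have : #|center @: R| <= #|A|.
    apply: subset_leq_card; apply/subsetP => y /imsetP [b _ ->].
    by case: (center_spec b).
  by rewrite (card_in_imset inj) leqNgt HR.
case/forall_inPn => z1 z1R /forall_inPn [z2 z2R].
rewrite negb_imply => /andP [/eqP Ec zn].
have [xA c1] := center_spec z1; have [_ c2] := center_spec z2.
rewrite -Ec in c2; set x := center z1 in xA c1 c2.
have addit : forall z, z \in R -> e x z -> ~~ connect (arc_rel F) z x ->
  exists w z, [/\ (w, z) \in F0, forall x, (x, z) \notin F & directed_forest e ((w, z) |: F)].
  move=> z zR exz nc; exists x, z; split.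
  - by rewrite inE /= xA exz.
  - exact: Rroot.
  - exact: (add_forest HF exz (Rroot _ zR) nc).
have z12 : forall z z', z \in R -> z' \in R -> connect (arc_rel F) z z' -> z = z'.
  by move=> z z' _ z'R; apply: root_connect; apply: Rroot.
case/orP: c1 => [/eqP E1|E1].
  case/orP: c2 => [/eqP E2|E2]; first by move: zn; rewrite -E1 -E2 eqxx.
  apply: (addit z2 z2R E2); apply/negP => C.
  by move: zn; rewrite (z12 _ _ z2R z1R) -?E1 ?eqxx //; rewrite -E1.
case/orP: c2 => [/eqP E2|E2].
  apply: (addit z1 z1R E1); apply/negP => C.
  by move: zn; rewrite (z12 _ _ z1R z2R) -?E2 ?eqxx //; rewrite -E2.
case C1 : (connect (arc_rel F) z1 x); last by apply: (addit z1 z1R E1); rewrite C1.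
case C2 : (connect (arc_rel F) z2 x); last by apply: (addit z2 z2R E2); rewrite C2.
case/orP: (anc_linear (forest_indeg HF) C1 C2) => C.
  by move: zn; rewrite (z12 _ _ z1R z2R C) eqxx.
by move: zn; rewrite (z12 _ _ z2R z1R C) eqxx.
Qed.

Definition K := skeleton (mG e) (dtree_complex e).

Lemma A_le : #|A| <= #|T|.
Proof. by rewrite -cardsT subset_leq_card // subsetT. Qed.

Lemma in_skel F : (F \in K) = directed_forest e F && (#|F| <= #|T| - #|A|).
Proof.
rewrite /K /skeleton /mG inE /dtree_complex inE rG_eq; congr andb.
have := A_le => HA'.
apply/idP/idP => H; lia.
Qed.

Lemma facetsE F : (F \in facets K) = directed_forest e F && (#|F| == #|T| - #|A|).
Proof.
rewrite /facets inE in_skel.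
apply/idP/idP.
  case/andP=> /andP [HF Hc] /forall_inP H.
  rewrite HF /= eqn_leq Hc /=; rewrite leqNgt; apply/negP => Hlt.
  have [w [z [wz0 Hz HF']]] := ext HF Hlt.
  have wzF : (w, z) \notin F by apply: Hz.
  have := H ((w, z) |: F); rewrite in_skel HF' cardsU1 wzF /= subsetUr /=.
  rewrite add1n Hlt => /(_ isT) /eqP E.
  by move: wzF; rewrite -E in_setU1 eqxx.
case/andP=> HF /eqP Hc; rewrite HF Hc leqnn /=.
apply/forall_inP => G; rewrite in_skel => /andP [_ HG]; apply/implyP => sFG.
by rewrite eq_sym eqEcard sFG Hc HG.
Qed.

Lemma pureK : pure K.
Proof. by move=> F G; rewrite !facetsE => /andP [_ /eqP ->] /andP [_ /eqP ->]. Qed.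

End Source.

Section Main.
Variable T : finType.
Variable e : rel T.
Hypothesis Hsym : symmetric e.
Hypothesis Hirr : irreflexive e.
Variable A : {set T}.
Hypothesis HA : complete_source e A.
Implicit Types (F : {set T * T}).

Let F0 := F0 e A.
Definition MM := 2 ^ #|{: T * T}|.
Definition lev F := #|F :\: F0|.
Definition ww F := wt (F0 :\: F).
Definition key F := lev F * MM + ww F.

Lemma ww_lt F : ww F < MM.
Proof. by apply: wt_lt => p _; rewrite /rk ltn_ord. Qed.

Lemma exch Fi Fj : Fi \in facets (K e) -> Fj \in facets (K e) -> Fi != Fj -> key Fi <= key Fj ->
  exists a Fl, [/\ Fl \in facets (K e), a \in Fj, a \notin Fi, Fl :&: Fj = Fj :\ a & key Fl < key Fj].
Proof.
rewrite !(facetsE Hsym HA) => /andP [HFi /eqP ci] /andP [HFj /eqP cj] nij Hk.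
have wi := ww_lt Fi; have wj := ww_lt Fj.
case/boolP: [exists a, (a \in Fj :\: F0) && (a \notin Fi)].
  case/existsP=> a /andP [aj aFi].
  have aFj : a \in Fj by move: aj; rewrite ?(in_setD1, in_setD, in_setU1, in_setI, in_set1) => /andP [].
  have aF0 : a \notin F0 by move: aj; rewrite ?(in_setD1, in_setD, in_setU1, in_setI, in_set1) => /andP [].
  have HF' : directed_forest e (Fj :\ a) by apply: sub_forest HFj; apply: subsetDl.
  have cj' : #|Fj| = #|Fj :\ a|.+1 by rewrite (cardsD1 a Fj) aFj.
  have Hlt : #|Fj :\ a| < #|T| - #|A| by rewrite -cj cj'.
  have [w [z [wz0 Hz HF'']]] := ext HA HF' Hlt.
  set b := (w, z) in wz0 Hz HF''.
  have ba : b != a by apply: contraNneq aF0 => <-.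
  have bFj : b \notin Fj.
    apply: contra (Hz w) => H; rewrite in_setD1 H andbT; exact: ba.
  exists a, (b |: (Fj :\ a)); split => //.
  - rewrite (facetsE Hsym HA) HF'' /= cardsU1.
    have bFj' : b \notin Fj :\ a by rewrite in_setD1 negb_and bFj orbT.
    by rewrite bFj' -cj cj'.
  - apply/setP => p; rewrite ?(in_setD1, in_setD, in_setU1, in_setI, in_set1).
    case: (p =P b) => [->|_] /=; first by rewrite (negbTE bFj) !andbF.
    by rewrite -andbA andbb.
  - have E : (b |: (Fj :\ a)) :\: F0 = (Fj :\: F0) :\ a.
      apply/setP => p; rewrite ?(in_setD1, in_setD, in_setU1, in_setI, in_set1).
      case: (p =P b) => [->|_] /=; first by rewrite wz0 !andbF.
      by rewrite andbCA.
    have Hl : lev Fj = (lev (b |: (Fj :\ a))).+1 by rewrite /lev E (cardsD1 a (Fj :\: F0)) aj.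
    rewrite /key Hl; have := ww_lt (b |: (Fj :\ a)).
    move: (lev _) (ww _) (ww Fj) MM => L W1 W2 M HW.
    apply: (@leq_trans (L * M + M)); first by rewrite ltn_add2l.
    by rewrite mulSn (addnC (L * M)) leq_addr.
rewrite negb_exists => /forallP Hsub.
have sub : Fj :\: F0 \subset Fi :\: F0.
  apply/subsetP => p pj; move: (Hsub p); rewrite pj /= negbK => pi.
  by move: pj; rewrite ?(in_setD1, in_setD, in_setU1, in_setI, in_set1) pi => /andP [-> _].
have levle : lev Fj <= lev Fi by apply: subset_leq_card.
have leveq : lev Fi = lev Fj by move: Hk; rewrite /key; nia.
have wle : ww Fi <= ww Fj by move: Hk; rewrite /key leveq; lia.
have Eq : Fi :\: F0 = Fj :\: F0.
  by apply/eqP; rewrite eq_sym eqEcard sub /= -/(lev Fi) -/(lev Fj) leveq.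
have XY : F0 :\: Fi != F0 :\: Fj.
  apply: contra nij => /eqP E; apply/eqP/setP => p.
  case: (boolP (p \in F0)) => pF0.
    by move/setP: E => /(_ p); rewrite ?(in_setD1, in_setD, in_setU1, in_setI, in_set1) pF0 !andbT => /negb_inj.
  by move/setP: Eq => /(_ p); rewrite ?(in_setD1, in_setD, in_setU1, in_setI, in_set1) pF0 /=.
have [b bYX Hb] := wt_max XY wle.
have bF0 : b \in F0 by move: bYX; rewrite ?(in_setD1, in_setD, in_setU1, in_setI, in_set1) => /andP [_ /andP [_ ->]].
have bFj : b \notin Fj by move: bYX; rewrite ?(in_setD1, in_setD, in_setU1, in_setI, in_set1) => /andP [_ /andP [-> _]].
have bFi : b \in Fi by move: bYX; rewrite ?(in_setD1, in_setD, in_setU1, in_setI, in_set1) bF0 andbT negbK => /andP [].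
case: b bYX Hb bF0 bFj bFi => x l bYX Hb bF0 bFj bFi.
have lroot : forall y, (y, l) \notin Fj.
  move=> y; apply/negP => yl.
  case: (boolP ((y, l) \in F0)) => ylF0.
    by move: bFj; rewrite -(F0_uniq HA ylF0 bF0) yl.
  have : (y, l) \in Fi.
    by move: (Hsub (y, l)); rewrite ?(in_setD1, in_setD, in_setU1, in_setI, in_set1) ylF0 yl /= negbK.
  move=> yli; have Eyx := forest_indeg HFi yli bFi; subst y.
  by move: ylF0; rewrite bF0.
have ex0 : exists a0, a0 \in Fj :\: Fi.
  case: (set_0Vmem (Fj :\: Fi)) => [E|[a0 Ha0]]; last by exists a0.
  exfalso; move/negP: nij; apply; rewrite eq_sym eqEcard ci cj leqnn andbT.
  by rewrite -setD_eq0 E.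
case/boolP: [exists a, (a \in Fj :\: Fi) && ~~ connect (arc_rel (Fj :\ a)) l x]; last first.
  rewrite negb_exists => /forallP Hall.
  have := avoid_set (forest_indeg HFj) ex0.
  have Hc : connect (arc_rel Fi) l x.
    apply: avoid_set (forest_indeg HFj) ex0 _ => a Ha.
    by move: (Hall a); rewrite Ha /= negbK.
  by move: (forest_acyc HFi bFi); rewrite /= Hc.
case/existsP=> a /andP [aji Hnc].
have aFj : a \in Fj by move: aji; rewrite ?(in_setD1, in_setD, in_setU1, in_setI, in_set1) => /andP [].
have aFi : a \notin Fi by move: aji; rewrite ?(in_setD1, in_setD, in_setU1, in_setI, in_set1) => /andP [].
have aF0 : a \in F0.
  apply/negPn/negP => aF0; move: (Hsub a); rewrite ?(in_setD1, in_setD, in_setU1, in_setI, in_set1) aF0 aFj /= negbK.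
  by rewrite (negbTE aFi).
have Hab : rk a < rk (x, l) by apply: Hb; rewrite ?(in_setD1, in_setD, in_setU1, in_setI, in_set1) aF0 aFj aFi.
have ba : (x, l) != a by apply: contraTneq Hab => ->; rewrite ltnn.
have HF' : directed_forest e (Fj :\ a) by apply: sub_forest HFj; apply: subsetDl.
have exl : e x l by apply: (forest_arcs HFi bFi).
have HFl : directed_forest e ((x, l) |: (Fj :\ a)).
  apply: add_forest HF' exl _ Hnc => y; rewrite ?(in_setD1, in_setD, in_setU1, in_setI, in_set1) negb_and lroot orbT //.
exists a, ((x, l) |: (Fj :\ a)); split => //.
- rewrite (facetsE Hsym HA) HFl /= cardsU1.
  have bFj' : (x, l) \notin Fj :\ a by rewrite in_setD1 negb_and bFj orbT.
  by rewrite bFj' -cj (cardsD1 a Fj) aFj.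
- apply/setP => p; rewrite ?(in_setD1, in_setD, in_setU1, in_setI, in_set1).
  case: (p =P (x, l)) => [->|_] /=; first by rewrite (negbTE bFj) !andbF.
  by rewrite -andbA andbb.
- have El : lev ((x, l) |: (Fj :\ a)) = lev Fj.
    rewrite /lev (_ : _ :\: F0 = Fj :\: F0) //; apply/setP => p; rewrite ?(in_setD1, in_setD, in_setU1, in_setI, in_set1).
    case: (p =P (x, l)) => [->|_] /=; first by rewrite bF0 (negbTE bFj).
    by case: (p =P a) => [->|/eqP pa] /=; rewrite ?aF0 ?in_set1 ?pa.
  have Ew : F0 :\: ((x, l) |: (Fj :\ a)) = a |: ((F0 :\: Fj) :\ (x, l)).
    apply/setP => p; rewrite ?(in_setD1, in_setD, in_setU1, in_setI, in_set1).
    case: (p =P (x, l)) => [->|_] /=; first by rewrite (negbTE ba).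
    by case: (p =P a) => [->|_]; rewrite ?eqxx /= ?aF0.
  have Hw : ww ((x, l) |: (Fj :\ a)) < ww Fj.
    rewrite /ww Ew /wt big_setU1 /=; last by rewrite ?(in_setD1, in_setD, in_setU1, in_setI, in_set1) aFj andbF.
    have xlY : (x, l) \in F0 :\: Fj by rewrite ?(in_setD1, in_setD, in_setU1, in_setI, in_set1) bFj bF0.
    rewrite [X in _ < X](big_setD1 _ xlY) /= ltn_add2r ltn_exp2l //.
  by rewrite /key El ltn_add2l.
Qed.

End Main.

Unset Implicit Arguments.

Theorem mainTheorem6 (T : finType) (e : rel T) :
  simple_graph e ->
  (exists A : {set T}, complete_source e A) ->
  shellable (skeleton (mG e) (dtree_complex e)).
Proof.
case=> Hsym Hirr [A HA].
split; first exact: (pureK Hsym HA).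
set s := sort (fun F G => key e A F <= key e A G) (enum (facets (K e))).
have Hmem : forall F, (F \in s) = (F \in facets (K e)) by move=> F; rewrite mem_sort mem_enum.
have Hu : uniq s by rewrite sort_uniq enum_uniq.
have Hsorted : sorted (fun F G => key e A F <= key e A G) s.
  by apply: sort_sorted => F G; exact: leq_total.
have Hle : forall i j, i < size s -> j < size s -> i <= j ->
    key e A (nth set0 s i) <= key e A (nth set0 s j).
  move=> i j Hi Hj Hij.
  have tr : transitive (fun F G => key e A F <= key e A G).
    by move=> F G H; apply: leq_trans.
  have rf : reflexive (fun F G => key e A F <= key e A G) by move=> F; apply: leqnn.
  by apply: (sorted_leq_nth tr rf set0 Hsorted); rewrite ?inE.
exists s; split; [exact: Hu | exact: Hmem | move=> i j ltij ltj].
have lti : i < size s := ltn_trans ltij ltj.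
have Fim : nth set0 s i \in facets (K e) by rewrite -Hmem mem_nth.
have Fjm : nth set0 s j \in facets (K e) by rewrite -Hmem mem_nth.
have nij : nth set0 s i != nth set0 s j by rewrite nth_uniq // neq_ltn ltij.
have Hk := Hle i j lti ltj (ltnW ltij).
have [a [Fl [Flm aj ai El Hkl]]] := exch Hsym HA Fim Fjm nij Hk.
have Fls : Fl \in s by rewrite Hmem.
exists (index Fl s); split.
  rewrite ltnNge; apply/negP => jl.
  have lls : index Fl s < size s by rewrite index_mem.
  have := Hle j (index Fl s) ltj lls jl; rewrite nth_index //.
  by rewrite leqNgt Hkl.
exists a; rewrite nth_index //; split => //; split; last exact: El.
rewrite El; apply/subsetP => p; rewrite !inE => /andP [pi pj]; rewrite pj andbT.
by apply: contraNneq ai => <-.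
Qed.
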